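(* Let $\nu$ be a probability measure on $\mathbb R$ not supported on a single point, and let $\mathcal I\subseteq\mathbb R$ be an open interval such that $Y(\theta)=\int e^{\theta x}\nu(dx)<\infty$ for all $\theta\in\mathcal I$. For $\theta\in\mathcal I$ let $\nu^\theta(dx)=Y(\theta)^{-1}e^{\theta x}\nu(dx)$, let $\varrho(\theta)=\int x\,\nu^\theta(dx)$, which maps $\mathcal I$ continuously and strictly increasingly onto an open interval $\mathcal J$, and let $\theta(\varrho)$ be its inverse. Let $\psi$ be a measurable function on $\mathbb R$ with $\int|\psi|d\nu^\theta<\infty$ for all $\theta\in\mathcal I$, and define $\Psi(\varrho)=\int\psi\,d\nu^{\theta(\varrho)}$ for $\varrho\in\mathcal J$ (an infinitely differentiable function). If $\psi$ is convex on $\mathbb R$, then $\Psi$ is convex on $\mathcal J$. If moreover there is no affine function $g(x)=ax+b$ with $\psi=g$ $\nu$-a.e., then $\Psi''(\varrho)>0$ for all $\varrho\in\mathcal J$, and in particular $\Psi$ is strictly convex on $\mathcal J$. *)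

(* Defs.v *)
From HB Require Import structures.
From mathcomp Require Import all_boot all_order all_algebra.
From mathcomp Require Import all_classical all_reals all_analysis.
Set Implicit Arguments. Unset Strict Implicit. Unset Printing Implicit Defensive.
Import Order.TTheory GRing.Theory Num.Theory.
Import numFieldNormedType.Exports.
Local Open Scope classical_set_scope.
Local Open Scope ring_scope.

Section Tilt.
Context (R : realType) (nu : probability R R).

Definition Ymgf (theta : R) : R := fine (\int[nu]_x (expR (theta * x))%:E).

(* \int f d nu^theta, where nu^theta(dx) = Y(theta)^{-1} e^{theta x} nu(dx) *)
Definition tilt_int (theta : R) (f : R -> R) : R :=
  (Ymgf theta)^-1 * fine (\int[nu]_x (f x * expR (theta * x))%:E).

Definition rho (theta : R) : R := tilt_int theta id.

Definition eitv (a b : \bar R) : set R := [set x : R | (a < x%:E < b)%E].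

Definition Jset (I : set R) : set R := rho @` I.

Definition theta_of (I : set R) (r : R) : R := xget 0 [set t | I t /\ rho t = r].

Definition PsiF (I : set R) (psi : R -> R) (r : R) : R :=
  tilt_int (theta_of I r) psi.

End Tilt.

Definition convex_on (R : realType) (D : set R) (f : R -> R) : Prop :=
  forall x y t, D x -> D y -> 0 <= t <= 1 ->
    f (t * x + (1 - t) * y) <= t * f x + (1 - t) * f y.

Definition strictly_convex_on (R : realType) (D : set R) (f : R -> R) : Prop :=
  forall x y t, D x -> D y -> x != y -> 0 < t < 1 ->
    f (t * x + (1 - t) * y) < t * f x + (1 - t) * f y.

(* Main.v *)
Require Import Defs.
From HB Require Import structures.
From mathcomp Require Import all_boot all_order all_algebra.
From mathcomp Require Import all_classical all_reals all_analysis.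
From mathcomp Require Import lra ring measurable_realfun.
Import Order.TTheory GRing.Theory Num.Theory.
Import numFieldNormedType.Exports.
Local Open Scope classical_set_scope.
Local Open Scope ring_scope.
Section P2.
Context (R : realType).
Implicit Types (f : R -> R) (J : set R).

Lemma cont_within_of_der J f x y : (forall z, J z -> derivable f z 1) ->
  (forall z, x <= z <= y -> J z) -> {within `[x, y], continuous f}.
Proof.
move=> df Jxy; apply: derivable_within_continuous => z; rewrite in_itv/= => zi.
exact/df/Jxy.
Qed.

Lemma mvt_split J f x y t :
  (forall z, J z -> derivable f z 1) ->
  (forall z, x <= z <= y -> J z) -> x < y -> 0 < t < 1 ->
  exists c1 c2, [/\ x < c1, c1 < c2, c2 < y &
   t * f x + (1 - t) * f y - f (t * x + (1 - t) * y) =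
   t * (1 - t) * (y - x) * (derive1 f c2 - derive1 f c1)].
Proof.
move=> df Jxy xy /andP[t0 t1].
set z := t * x + (1 - t) * y.
have xz : x < z by rewrite /z; nra.
have zy : z < y by rewrite /z; nra.
have der u v : x <= u -> v <= y -> forall w, w \in `]u, v[%R -> is_derive w 1 f (derive1 f w).
  move=> xu vy w; rewrite in_itv/= => /andP[uw wv]; rewrite derive1E.
  apply/derivableP/df/Jxy; apply/andP; split; lra.
have J1 : forall w, x <= w <= z -> J w.
  move=> w /andP[h1 h2]; apply: Jxy; apply/andP; split => //; exact: (le_trans h2 (ltW zy)).
have J2 : forall w, z <= w <= y -> J w.
  move=> w /andP[h1 h2]; apply: Jxy; apply/andP; split => //; exact: (le_trans (ltW xz) h1).
have [c1 c1i e1] := MVT xz (der x z (lexx _) (ltW zy)) (@cont_within_of_der J f x z df J1).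
have [c2 c2i e2] := MVT zy (der z y (ltW xz) (lexx _)) (@cont_within_of_der J f z y df J2).
move: c1i c2i; rewrite !in_itv/= => /andP[xc1 c1z] /andP[zc2 c2y].
exists c1, c2; split.
- exact: xc1.
- exact: (lt_trans c1z zc2).
- exact: c2y.
have -> : t * f x + (1 - t) * f y - f z =
  - t * (f z - f x) + (1 - t) * (f y - f z) by ring.
rewrite e1 e2 /z; ring.
Qed.

Definition itvset J := forall x y z, J x -> J y -> x <= z <= y -> J z.

Lemma D2_gap J f x y t (strict : bool) : itvset J ->
  (forall z, J z -> derivable f z 1 /\ derivable (derive1 f) z 1 /\
     (if strict then 0 < derive1 (derive1 f) z else 0 <= derive1 (derive1 f) z)) ->
  J x -> J y -> x < y -> 0 < t < 1 ->
  (if strict then 0 < t * f x + (1 - t) * f y - f (t * x + (1 - t) * y)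
   else 0 <= t * f x + (1 - t) * f y - f (t * x + (1 - t) * y)).
Proof.
move=> iJ dJ Jx Jy xy t01.
have Jxy : forall z, x <= z <= y -> J z by move=> z; exact: iJ.
have df : forall z, J z -> derivable f z 1 by move=> z /dJ[].
have ddf : forall z, J z -> derivable (derive1 f) z 1 by move=> z /dJ[_ []].
have [c1 [c2 [xc1 c12 c2y ->]]] := @mvt_split J f x y t df Jxy xy t01.
have Jc : forall w, c1 <= w <= c2 -> J w.
  move=> w /andP[h1 h2]; apply: Jxy; apply/andP; split.
  - exact: (le_trans (ltW xc1) h1).
  - exact: (le_trans h2 (ltW c2y)).
have cc := @cont_within_of_der J (derive1 f) c1 c2 ddf Jc.
have dd : forall w, w \in `]c1, c2[%R -> derivable (derive1 f) w 1.
  move=> w; rewrite in_itv/= => /andP[h1 h2]; apply/ddf/Jc.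
  by rewrite (ltW h1) (ltW h2).
have pos : 0 < t * (1 - t) * (y - x).
  move: t01 => /andP[t0 t1]; rewrite !mulr_gt0 // ?subr_gt0 //.
case: strict dJ => dJ.
- apply: mulr_gt0 => //; rewrite subr_gt0.
  apply: (@gtr0_derive1_incr _ _ c1 c2) => //.
  + move=> w; rewrite in_itv/= => /andP[h1 h2].
    by have [_ [_]] := dJ w (Jc w (ltac:(by rewrite (ltW h1) (ltW h2)))).
- apply: mulr_ge0; first exact: ltW.
  rewrite subr_ge0.
  apply: (@ger0_derive1_ndecr _ _ c1 c2) => //.
  + move=> w; rewrite in_itv/= => /andP[h1 h2].
    by have [_ [_]] := dJ w (Jc w (ltac:(by rewrite (ltW h1) (ltW h2)))).
  + exact: ltW.
Qed.

Lemma convex_of_D2 J f : itvset J ->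
  (forall z, J z -> derivable f z 1 /\ derivable (derive1 f) z 1 /\
     0 <= derive1 (derive1 f) z) -> convex_on J f.
Proof.
move=> iJ dJ x y t Jx Jy /andP[t0 t1].
have [->|tn0] := eqVneq t 0; first by rewrite !mul0r !add0r subr0 !mul1r.
have [->|tn1] := eqVneq t 1; first by rewrite subrr !mul0r !addr0 !mul1r.
have t01 : 0 < t < 1 by rewrite !lt_neqAle t0 t1 eq_sym tn0 tn1.
have [xy|yx|<-] := ltgtP x y.
- by rewrite -subr_ge0; exact: (@D2_gap J f x y t false).
- have t01' : 0 < 1 - t < 1 by move: t01 => /andP[? ?]; apply/andP; split; lra.
  have := @D2_gap J f y x (1 - t) false iJ dJ Jy Jx yx t01'.
  rewrite subKr => h; rewrite -subr_ge0.
  by rewrite [t * f x + _]addrC [t * x + _]addrC.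
- have -> : t * x + (1 - t) * x = x by ring.
  have -> : t * f x + (1 - t) * f x = f x by ring.
  exact: lexx.
Qed.

Lemma sconvex_of_D2 J f : itvset J ->
  (forall z, J z -> derivable f z 1 /\ derivable (derive1 f) z 1 /\
     0 < derive1 (derive1 f) z) -> strictly_convex_on J f.
Proof.
move=> iJ dJ x y t Jx Jy xny t01.
have [xy|yx|exy] := ltgtP x y.
- by rewrite -subr_gt0; exact: (@D2_gap J f x y t true).
- have t01' : 0 < 1 - t < 1 by move: t01 => /andP[? ?]; apply/andP; split; lra.
  have := @D2_gap J f y x (1 - t) true iJ dJ Jy Jx yx t01'.
  rewrite subKr => h; rewrite -subr_gt0.
  by rewrite [t * f x + _]addrC [t * x + _]addrC.
- by rewrite exy eqxx in xny.
Qed.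

End P2.

Section P1.
Context (R : realType) (phi : R -> R).
Hypothesis cvx : forall x y t, 0 <= t <= 1 ->
  phi (t * x + (1 - t) * y) <= t * phi x + (1 - t) * phi y.

Lemma sideZ1 s x0 z : phi s = 0 -> phi x0 < 0 -> (z - s) * (x0 - s) < 0 -> 0 < phi z.
Proof.
move=> ps px h.
have xz : x0 - z != 0.
  apply/negP => /eqP e; have : z = x0 by apply/eqP; rewrite eq_sym -subr_eq0 e.
  by move=> ezx; move: h; rewrite ezx -expr2 ltNge sqr_ge0.
set l := (x0 - s) / (x0 - z).
have hl : l * (x0 - z) = x0 - s by rewrite /l divfK.
have sq : 0 <= (x0 - s) * (x0 - s) by rewrite -expr2 sqr_ge0.
have p : 0 < (x0 - s) * (x0 - z) by nra.
have q : 0 < (x0 - z) * (x0 - z).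
  by rewrite -expr2 lt_def sqrf_eq0 xz sqr_ge0.
have hl2 : l * ((x0 - z) * (x0 - z)) = (x0 - s) * (x0 - z) by rewrite mulrA hl.
have l0 : 0 < l.
  by move: hl2; rewrite -(pmulr_lgt0 _ q) => ->.
have p2 : (x0 - s) * (x0 - z) < (x0 - z) * (x0 - z) by nra.
have l1 : l < 1.
  by rewrite -(ltr_pM2r q) mul1r hl2.
have l01 : 0 <= l <= 1 by rewrite (ltW l0) (ltW l1).
have := cvx z x0 l l01.
have -> : l * z + (1 - l) * x0 = s.
  have -> : l * z + (1 - l) * x0 = x0 - l * (x0 - z) by ring.
  by rewrite hl; ring.
rewrite ps => hh; nra.
Qed.

Lemma sideZ2 s x0 z : phi s = 0 -> phi x0 < 0 -> (z - s) * (x0 - z) >= 0 -> phi z <= 0.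
Proof.
move=> ps px h.
have sx : x0 - s != 0.
  apply/negP => /eqP e; have : s = x0 by apply/eqP; rewrite eq_sym -subr_eq0 e.
  by move=> esx; move: px; rewrite -esx ps ltxx.
set l := (x0 - z) / (x0 - s).
have hl : l * (x0 - s) = x0 - z by rewrite /l divfK.
have sq1 : 0 <= (x0 - z) * (x0 - z) by rewrite -expr2 sqr_ge0.
have sq2 : 0 <= (z - s) * (z - s) by rewrite -expr2 sqr_ge0.
have p : 0 <= (x0 - z) * (x0 - s) by nra.
have q : 0 < (x0 - s) * (x0 - s).
  by rewrite -expr2 lt_def sqrf_eq0 sx sqr_ge0.
have hl2 : l * ((x0 - s) * (x0 - s)) = (x0 - z) * (x0 - s) by rewrite mulrA hl.
have l0 : 0 <= l.
  by move: hl2; rewrite -(pmulr_lge0 _ q) => ->.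
have p2 : (x0 - z) * (x0 - s) <= (x0 - s) * (x0 - s) by nra.
have l1 : l <= 1.
  by rewrite -(ler_pM2r q) mul1r hl2.
have l01 : 0 <= l <= 1 by rewrite l0 l1.
have := cvx s x0 l l01.
have -> : l * s + (1 - l) * x0 = z.
  have -> : l * s + (1 - l) * x0 = x0 - l * (x0 - s) by ring.
  by rewrite hl; ring.
rewrite ps => hh; nra.
Qed.


Lemma cvx_bound x0 e d : 0 <= d <= 1 ->
  `|phi (x0 + d * e) - phi x0| <=
    d * (`|phi (x0 + e) - phi x0| + `|phi (x0 - e) - phi x0|).
Proof.
move=> /andP[d0 d1].
have d01 : 0 <= d <= 1 by rewrite d0 d1.
have h1 := cvx (x0 + e) x0 d d01.
have h2 := cvx (x0 - e) x0 d d01.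
have hh : 0 <= (1 / 2 : R) <= 1 by apply/andP; split; lra.
have h3 := cvx (x0 + d * e) (x0 - d * e) (1/2) hh.
have E1 : d * (x0 + e) + (1 - d) * x0 = x0 + d * e by ring.
have E2 : d * (x0 - e) + (1 - d) * x0 = x0 - d * e by ring.
have E3 : 1 / 2 * (x0 + d * e) + (1 - 1 / 2) * (x0 - d * e) = x0 by field.
rewrite E1 in h1; rewrite E2 in h2; rewrite E3 in h3.
have a1 := ler_norm (phi (x0 + e) - phi x0).
have a2 := ler_norm (phi (x0 - e) - phi x0).
have a3 := ler_norm (- (phi (x0 + e) - phi x0)); rewrite normrN in a3.
have a4 := ler_norm (- (phi (x0 - e) - phi x0)); rewrite normrN in a4.
have n1 := normr_ge0 (phi (x0 + e) - phi x0).
have n2 := normr_ge0 (phi (x0 - e) - phi x0).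
rewrite ler_norml; apply/andP; split; nra.
Qed.

Lemma cvx_cont : continuous phi.
Proof.
move=> x0.
set A := `|phi (x0 + 1) - phi x0| + `|phi (x0 - 1) - phi x0|.
have A0 : 0 <= A by rewrite addr_ge0.
have key : forall y, `|y - x0| <= 1 -> `|phi y - phi x0| <= `|y - x0| * A.
  move=> y hy; have [yx|xy] := leP x0 y.
  - have ny : `|y - x0| = y - x0 by rewrite ger0_norm // subr_ge0.
    have := @cvx_bound x0 1 `|y - x0| (ltac:(by rewrite normr_ge0 hy)).
    have E : x0 + `|y - x0| * 1 = y by rewrite ny; ring.
    by rewrite E.
  - have ny : `|y - x0| = x0 - y by rewrite ltr0_norm ?subr_lt0 // opprB.
    have := @cvx_bound x0 (-1) `|y - x0| (ltac:(by rewrite normr_ge0 hy)).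
    have E : x0 + `|y - x0| * -1 = y by rewrite ny; ring.
    have E2 : x0 - -1 = x0 + 1 by ring.
    rewrite E E2 => H; apply: (le_trans H).
    by rewrite /A (addrC `|phi (x0 + -1) - phi x0|).
apply/cvgrPdist_lt => eps eps0.
near=> y.
have hy : `|y - x0| <= 1 by rewrite distrC; near: y; apply: cvgr_dist_le; [exact: cvg_id | lra].
have hy2 : `|y - x0| * (A + 1) < eps.
  rewrite -ltr_pdivlMr; last lra.
  by rewrite distrC; near: y; apply: cvgr_dist_lt; [exact: cvg_id | apply: divr_gt0 => //; lra].
rewrite distrC.
apply: (le_lt_trans (key y hy)).
apply: le_lt_trans hy2.
by rewrite ler_wpM2l // lerDl.
Unshelve. all: end_near.
Qed.


Lemma zero_between a b : a <= b -> phi a < 0 -> 0 <= phi b ->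
  exists2 c, a < c <= b & phi c = 0.
Proof.
move=> ab pa pb.
have [c] := @IVT R phi a b 0 ab (@continuous_subspaceT _ _ _ phi cvx_cont)
  (ltac:(rewrite min_l ?max_r; [by rewrite (ltW pa) pb| |]; exact: (le_trans (ltW pa) pb))).
rewrite in_itv/= => /andP[ac cb] pc; exists c => //.
rewrite cb andbT lt_neqAle ac andbT; apply/negP => /eqP e.
by move: pa; rewrite e pc ltxx.
Qed.

Lemma zero_between2 a b : a <= b -> 0 <= phi a -> phi b < 0 ->
  exists2 c, a <= c < b & phi c = 0.
Proof.
move=> ab pa pb.
have [c] := @IVT R phi a b 0 ab (@continuous_subspaceT _ _ _ phi cvx_cont)
  (ltac:(rewrite min_r ?max_l; [by rewrite (ltW pb) pa| |]; exact: (le_trans (ltW pb) pa))).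
rewrite in_itv/= => /andP[ac cb] pc; exists c => //.
rewrite ac /= lt_neqAle cb andbT; apply/negP => /eqP e.
by move: pb; rewrite -e pc ltxx.
Qed.

Lemma RL : (forall y, 0 <= phi y) \/ (forall y, phi y <= 0) \/
 (exists t, phi t = 0 /\ ((forall y, 0 <= phi y * (y - t)) \/
                          (forall y, phi y * (y - t) <= 0))) \/
 (exists s t, phi s = 0 /\ phi t = 0 /\
    forall y, 0 <= phi y * ((y - s) * (y - t))).
Proof.
case: (pselect (exists x0, phi x0 < 0)) => [[x0 px0]|nneg]; last first.
  left => y; rewrite leNgt; apply/negP => h; apply: nneg; exists y; exact: h.
right.
case: (pselect (exists y, x0 < y /\ 0 <= phi y)) => [[y [xy py]]|nR];
case: (pselect (exists y, y < x0 /\ 0 <= phi y)) => [[y' [yx py']]|nL].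
- have [t /andP[xt _] pt] := zero_between x0 y (ltW xy) px0 py.
  have [s /andP[_ sx] ps] := zero_between2 y' x0 (ltW yx) py' px0.
  right; right; exists s, t; split => //; split => // z.
  have [zs|sz] := ltP z s.
    have pz := sideZ1 s x0 z ps px0 (ltac:(nra)).
    have h : 0 < (z - s) * (z - t) by nra.
    nra.
  have [zt|tz] := leP z t.
    have pz : phi z <= 0.
      have [zx|xz] := leP z x0.
        by apply: (sideZ2 s x0 z ps px0); nra.
      by apply: (sideZ2 t x0 z pt px0); nra.
    have h : (z - s) * (z - t) <= 0 by nra.
    nra.
  have pz := sideZ1 t x0 z pt px0 (ltac:(nra)).
  have h : 0 < (z - s) * (z - t) by nra.
  nra.
- have [t /andP[xt _] pt] := zero_between x0 y (ltW xy) px0 py.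
  right; left; exists t; split => //; left => z.
  have [zt|tz] := leP z t; last first.
    have pz := sideZ1 t x0 z pt px0 (ltac:(nra)); nra.
  have [zx|xz] := ltP z x0.
    have : phi z < 0.
      rewrite ltNge; apply/negP => h; apply: nL; exists z; split => //.
    move=> pz; nra.
  have pz := sideZ2 t x0 z pt px0 (ltac:(nra)); nra.
- have [s /andP[_ sx] ps] := zero_between2 y' x0 (ltW yx) py' px0.
  right; left; exists s; split => //; right => z.
  have [zs|sz] := ltP z s.
    have pz := sideZ1 s x0 z ps px0 (ltac:(nra)); nra.
  have [zx|xz] := leP z x0.
    have pz := sideZ2 s x0 z ps px0 (ltac:(nra)); nra.
  have : phi z < 0.
    rewrite ltNge; apply/negP => h; apply: nR; exists z; split => //.
  move=> pz; nra.
- left => z; have [zx|xz|zx] := ltgtP z x0.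
  + rewrite leNgt; apply/negP => h; apply: nL; exists z; split => //; exact: ltW.
  + rewrite leNgt; apply/negP => h; apply: nR; exists z; split => //; exact: ltW.
  + by rewrite zx ltW.
Qed.



End P1.

Set Implicit Arguments. Unset Strict Implicit.
Section DA.
Context (R : realType).
Implicit Types (f g : R -> R).

Lemma DM f g (t a b : R) : is_derive t 1 f a -> is_derive t 1 g b ->
  is_derive t 1 (fun s => f s * g s) (f t * b + g t * a).
Proof. by move=> fa gb; have := is_deriveM fa gb. Qed.

Lemma DD f g (t a b : R) : is_derive t 1 f a -> is_derive t 1 g b ->
  is_derive t 1 (fun s => f s + g s) (a + b).
Proof. by move=> fa gb; have := is_deriveD fa gb. Qed.

Lemma DB f g (t a b : R) : is_derive t 1 f a -> is_derive t 1 g b ->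
  is_derive t 1 (fun s => f s - g s) (a - b).
Proof. by move=> fa gb; have := is_deriveB fa gb. Qed.

Lemma Dval f (t a b : R) : is_derive t 1 f a -> a = b -> is_derive t 1 f b.
Proof. by move=> h <-. Qed.

Lemma DV f (t a : R) : f t != 0 -> is_derive t 1 f a ->
  is_derive t 1 (fun s => (f s)^-1) (- a / (f t) ^+ 2).
Proof.
move=> ft fa; have := is_deriveV ft fa.
move=> h; eapply Dval; first exact: h.
by change (- (f t ^+ 2)^-1 * a = - a / f t ^+ 2); rewrite mulNr mulrC mulNr.
Qed.

End DA.


Section Int.
Context (R : realType) (nu : probability R R).
Local Notation INT f := (nu.-integrable setT (EFin \o f)).

Lemma iext (f g : R -> R) : (forall y, f y = g y) -> INT f -> INT g.
Proof. by move=> fg; apply: eq_integrable => // y _ /=; rewrite fg. Qed.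

Lemma iD (f g : R -> R) : INT f -> INT g -> INT (fun y => f y + g y).
Proof.
move=> fi gi; have := integrableD measurableT fi gi.
by apply: eq_integrable => // y _ /=; rewrite EFinD.
Qed.

Lemma iZ (c : R) (f : R -> R) : INT f -> INT (fun y => c * f y).
Proof.
move=> fi; have := integrableZl measurableT c fi.
by apply: eq_integrable => // y _ /=; rewrite EFinM.
Qed.

Lemma iN (f : R -> R) : INT f -> INT (fun y => `|f y|).
Proof. by move=> fi; have := integrable_norm fi. Qed.

Lemma ile (f g : R -> R) : measurable_fun setT f ->
  (forall y, `|f y| <= `|g y|) -> INT g -> INT f.
Proof.
move=> mf fg gi; apply: le_integrable gi => //.
  exact/measurable_EFinP.
by move=> y _ /=; rewrite lee_fin.
Qed.

Lemma imeas (f : R -> R) : INT f -> measurable_fun setT f.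
Proof. by move=> /integrableP[/measurable_EFinP]. Qed.

End Int.

Section Meas.
Context (R : realType) (nu : probability R R) (I : set R).
Hypothesis Iop : forall t, I t -> exists2 d, 0 < d & forall s, `|s - t| <= d -> I s.

Definition Ew (t : R) (g : R -> R) : R := \int[nu]_(y in setT) (g y * expR (t * y)).
Definition Good (g : R -> R) := measurable_fun setT g /\
  forall t, I t -> nu.-integrable setT (EFin \o (fun y => g y * expR (t * y))).

Lemma mexp (t : R) : measurable_fun setT (fun y : R => expR (t * y)).
Proof.
apply: continuous_measurable_fun => y.
apply: continuous_comp; last exact: continuous_expR.
apply: continuousM; [exact: cvg_cst | exact: cvg_id].
Qed.

Lemma BL (x u v d y : R) : u <= x <= v -> 0 < d ->
  `|y| * expR (x * y) <= (expR ((u - d) * y) + expR ((v + d) * y)) / d.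
Proof.
move=> /andP[ux xv] d0.
rewrite ler_pdivlMr //.
have [y0|y0] := leP 0 y.
- rewrite ger0_norm //.
  have h1 : d * y <= expR (d * y) by have := expR_ge1Dx (d * y); lra.
  have h2 : expR (x * y) <= expR (v * y) by rewrite ler_expR ler_wpM2r.
  have h3 : expR ((v + d) * y) = expR (v * y) * expR (d * y) by rewrite -expRD mulrDl.
  have := expR_gt0 (x * y); have := expR_gt0 ((u - d) * y); have := expR_gt0 (d * y).
  have h4 : 0 <= d * y by rewrite mulr_ge0 // ltW.
  nra.
- rewrite ltr0_norm //.
  have h1 : - (d * y) <= expR (- (d * y)) by have := expR_ge1Dx (- (d * y)); lra.
  have h2 : expR (x * y) <= expR (u * y) by rewrite ler_expR ler_wnM2r // ltW.
  have h3 : expR ((u - d) * y) = expR (u * y) * expR (- (d * y)).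
    by rewrite -expRD mulrBl.
  have := expR_gt0 (x * y); have := expR_gt0 ((v + d) * y); have := expR_gt0 (- (d * y)).
  have h4 : 0 <= - (d * y) by rewrite oppr_ge0 pmulr_rle0 // ltW.
  nra.
Qed.


Lemma dexp (c y x : R) : is_derive x 1 (fun s : R => c * expR (s * y)) (c * (y * expR (x * y))).
Proof.
have h1 : is_derive x 1 (fun s : R => s * y) y.
  have hid : is_derive x 1 (fun s : R => s) 1 by exact: is_derive_id.
  have hc : is_derive x 1 (fun s : R => y) 0 by exact: is_derive_cst.
  apply: (Dval (DM hid hc)).
  by rewrite mulr0 add0r mulr1.
have h2 : is_derive x 1 (fun s : R => expR (s * y)) (expR (x * y) * y).
  exact: (@is_derive1_comp _ expR (fun s => s * y) x (expR (x * y)) y).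
apply: (Dval (DM (is_derive_cst c x 1) h2)).
by rewrite /=; ring.
Qed.


Local Notation INT f := (nu.-integrable setT (EFin \o f)).

Lemma pder (g : R -> R) x y :
  partial1of2 (fun x y => g y * expR (x * y)) x y = g y * (y * expR (x * y)).
Proof. by rewrite partial1of2E; case: (dexp (g y) y x) => _ ->. Qed.

Lemma Gmeas g t : Good g -> measurable_fun setT (fun y => g y * expR (t * y)).
Proof. by move=> [mg _]; apply: measurable_funM => //; exact: mexp. Qed.

Lemma dom g t d e : Good g -> I (t - d) -> I (t + d) -> 0 < e ->
  INT (fun y => (`|g y * expR ((t - d) * y)| + `|g y * expR ((t + d) * y)|) / e).
Proof.
move=> [mg ig] I1 I2 e0.
apply: (iext _ (iZ e^-1 (iD (iN (ig _ I1)) (iN (ig _ I2))))) => y.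
by rewrite mulrC.
Qed.

Lemma Iside t d : (forall s, `|s - t| <= d -> I s) -> 0 < d -> I (t - d) /\ I (t + d).
Proof.
move=> h d0; split; apply: h.
- have -> : t - d - t = - d by ring.
  by rewrite normrN ger0_norm // ltW.
- have -> : t + d - t = d by ring.
  by rewrite ger0_norm // ltW.
Qed.

Lemma absgE (g : R -> R) s y : `|g y * expR (s * y)| = `|g y| * expR (s * y).
Proof. by rewrite normrM (ger0_norm (expR_ge0 _)). Qed.

Lemma GoodM g : Good g -> Good (fun y => g y * y).
Proof.
move=> Gg; split.
  by apply: measurable_funM => //; first exact: Gg.1.
move=> t It; have [d d0 hd] := Iop It.
have [I1 I2] := Iside hd d0.
apply: (ile _ _ (dom Gg I1 I2 d0)).
  by apply: measurable_funM; [apply: measurable_funM => //; exact: Gg.1 | exact: mexp].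
move=> y; rewrite !absgE.
rewrite [X in _ <= X]ger0_norm; last first.
  by apply: divr_ge0; [apply: addr_ge0; apply: mulr_ge0 => //; exact: expR_ge0 | exact: ltW].
rewrite normrM -mulrA -mulrDr -mulrA ler_wpM2l //.
by apply: BL => //; rewrite lexx.
Qed.

Lemma DER g t : Good g -> I t ->
  is_derive t 1 (fun s => Ew s g) (Ew t (fun y => g y * y)).
Proof.
move=> Gg It; have [d d0 hd] := Iop It.
have [I1 I2] := Iside hd d0.
have d20 : 0 < d / 2 by apply: divr_gt0.
set u := t - d / 2; set v := t + d / 2.
pose f := fun x y => g y * expR (x * y).
pose G := fun y => (`|g y * expR ((t - d) * y)| + `|g y * expR ((t + d) * y)|) / (d / 2).
have Ia : `]u, v[%classic t.
  by rewrite /= in_itv /= /u /v; apply/andP; split; lra.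
have Ix : forall x, `]u, v[%classic x -> I x.
  move=> x; rewrite /= in_itv /= /u /v => /andP[h1 h2]; apply: hd.
  rewrite ler_norml; apply/andP; split; lra.
have intf : forall x, `]u, v[%classic x -> nu.-integrable setT (EFin \o f x).
  by move=> x /Ix Ix'; exact: (Gg.2 x Ix').
have derf1 : forall x y, `]u, v[%classic x -> setT y -> derivable (f^~ y) x 1.
  by move=> x y _ _; case: (dexp (g y) y x).
have G0 : forall y, 0 <= G y.
  by move=> y; rewrite /G divr_ge0 ?addr_ge0 // ltW.
have intG : nu.-integrable setT (EFin \o G) := dom Gg I1 I2 d20.
have Gub : forall x y, `]u, v[%classic x -> setT y -> `|partial1of2 f x y| <= G y.
  move=> x y; rewrite /= in_itv /= => /andP[ux xv] _.
  rewrite pder /G !absgE (normrM (g y)) (normrM y) (ger0_norm (expR_ge0 _)).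
  rewrite -mulrDr -mulrA ler_wpM2l //.
  have := @BL x u v (d / 2) y (ltac:(by rewrite (ltW ux) (ltW xv))) d20.
  have -> : u - d / 2 = t - d by rewrite /u; field.
  have -> : v + d / 2 = t + d by rewrite /v; field.
  done.
have dF := derivable_under_integral measurableT Ia intf derf1 G0 intG Gub.
have vF := differentiation_under_integral measurableT Ia intf derf1 G0 intG Gub.
apply: (Dval (derivableP dF)).
rewrite -derive1E vF /Ew; apply: eq_Rintegral => y _.
by rewrite pder mulrA.
Qed.

End Meas.

Set Implicit Arguments. Unset Strict Implicit.

Section Meas2.
Context (R : realType) (nu : probability R R) (I : set R).
Hypothesis Iop : forall t, I t -> exists2 d, 0 < d & forall s, `|s - t| <= d -> I s.
Local Notation Ew := (Ew nu).
Local Notation Good := (Good nu I).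

Lemma Goodext f g : (forall y, f y = g y) -> Good f -> Good g.
Proof.
move=> fg [mf i]; have -> : g = f by apply/funext => y; rewrite fg.
by split.
Qed.

Lemma GoodD f g : Good f -> Good g -> Good (fun y => f y + g y).
Proof.
move=> [mf fi] [mg gi]; split; first exact: measurable_funD.
move=> t It; apply: (iext _ (iD (fi t It) (gi t It))) => y.
by rewrite mulrDl.
Qed.

Lemma GoodZ c f : Good f -> Good (fun y => c * f y).
Proof.
move=> [mf fi]; split; first by apply: measurable_funM.
move=> t It; apply: (iext _ (iZ c (fi t It))) => y.
by rewrite mulrA.
Qed.

Lemma Ewext t f g : (forall y, f y = g y) -> Ew t f = Ew t g.
Proof. by move=> fg; rewrite /Ew; apply: eq_Rintegral => y _; rewrite fg. Qed.

Lemma EwD t f g : I t -> Good f -> Good g -> Ew t (fun y => f y + g y) = Ew t f + Ew t g.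
Proof.
move=> It [_ fi] [_ gi]; rewrite /Ew -RintegralD //; last first.
  exact: gi. exact: fi.
by apply: eq_Rintegral => y _; rewrite mulrDl.
Qed.

Lemma EwZ t c f : I t -> Good f -> Ew t (fun y => c * f y) = c * Ew t f.
Proof.
move=> It [_ fi]; rewrite /Ew -RintegralZl //; last exact: fi.
by apply: eq_Rintegral => y _; rewrite mulrA.
Qed.

Lemma Ew_ge0 t f : (forall y, 0 <= f y) -> 0 <= Ew t f.
Proof.
move=> f0; rewrite /Ew; apply: Rintegral_ge0 => y _.
by apply: mulr_ge0 => //; exact: expR_ge0.
Qed.

Lemma aeF : ~ {ae nu, forall y : R, False}.
Proof.
move=> [N [mN N0 sN]].
have : (nu setT <= nu N)%E.
  apply: le_measure; [by rewrite inE | by rewrite inE |].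
  by move=> y _; apply: sN => /=; apply.
by rewrite N0 probability_setT lee_fin ler10.
Qed.


Lemma Ew_eq0 t f : I t -> Good f -> (forall y, 0 <= f y) -> Ew t f = 0 ->
  {ae nu, forall y, f y = 0}.
Proof.
move=> It [mf fi] f0 E0.
pose h := fun y : R => f y * expR (t * y).
have hi : nu.-integrable setT (EFin \o h) := fi t It.
have mh : measurable_fun setT (EFin \o h).
  by apply/measurable_EFinP; apply: measurable_funM => //; exact: mexp.
have fin := integrable_fin_num measurableT hi.
have I0 : (\int[nu]_(y in setT) (EFin \o h) y = 0)%E.
  by rewrite -[LHS]fineK //; move: E0; rewrite /Ew /Rintegral => ->.
have A : (\int[nu]_(y in setT) `|(EFin \o h) y| = 0)%E.
  rewrite -I0; apply: eq_integral => y _; rewrite gee0_abs // lee_fin.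
  by apply: mulr_ge0 => //; exact: expR_ge0.
have := (ae_eq_integral_abs nu measurableT mh).1 A.
apply: filterS => y /(_ Logic.I) /= hy.
have /eqP : h y = 0 by case: hy.
by rewrite mulf_eq0 expR_eq0 orbF => /eqP.
Qed.

Lemma Ew_ae0 t f : I t -> Good f -> {ae nu, forall y, f y = 0} -> Ew t f = 0.
Proof.
move=> It [mf fi] ae0.
pose h := fun y : R => f y * expR (t * y).
have mh : measurable_fun setT (EFin \o h).
  by apply/measurable_EFinP; apply: measurable_funM => //; exact: mexp.
rewrite /Ew /Rintegral (ae_eq_integral (cst 0%E)) //.
- by rewrite integral0.
- move: ae0; apply: filterS => y /= -> _.
  by rewrite mul0r.
Qed.


Lemma ae_imp (P Q : R -> Prop) : (forall y, P y -> Q y) -> {ae nu, forall y, P y} ->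
  {ae nu, forall y, Q y}.
Proof. by move=> PQ; apply: filterS. Qed.

Lemma SIGN t (phi : R -> R) : I t -> Good phi ->
  (forall x y s, 0 <= s <= 1 ->
     phi (s * x + (1 - s) * y) <= s * phi x + (1 - s) * phi y) ->
  Ew t phi = 0 -> Ew t (fun y => phi y * y) = 0 ->
  0 <= Ew t (fun y => phi y * y * y) /\
  (Ew t (fun y => phi y * y * y) = 0 -> {ae nu, forall y, phi y = 0}).
Proof.
move=> It Gp cvx E0 E1.
have Gp1 := GoodM Iop Gp.
have Gp2 := GoodM Iop Gp1.
suff fin : {ae nu, forall y, phi y = 0} ->
  0 <= Ew t (fun y => phi y * y * y) /\
  (Ew t (fun y => phi y * y * y) = 0 -> {ae nu, forall y, phi y = 0}).
  have [a|[b|[[t0 [pt0 [c|c]]]|[s [t0 [ps [pt0 d]]]]]]] := @RL _ phi cvx.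
  - exact/fin/(Ew_eq0 It Gp a E0).
  - apply: fin; have G' := GoodZ (-1) Gp.
    have F0 : forall y, 0 <= -1 * phi y by move=> y; rewrite mulN1r oppr_ge0; exact: b.
    have := Ew_eq0 It G' F0.
    rewrite EwZ // E0 mulr0 => /(_ erefl); apply: ae_imp => y.
    by move/eqP; rewrite mulN1r oppr_eq0 => /eqP.
  - apply: fin.
    pose F := fun y => phi y * y + (- t0) * phi y.
    have GF : Good F := GoodD Gp1 (GoodZ _ Gp).
    have EF : Ew t F = 0 by rewrite EwD // ?EwZ // ?E0 ?E1 ?mulr0 ?addr0 //; exact: GoodZ.
    have F0 : forall y, 0 <= F y.
      by move=> y; rewrite /F -[_ * y + _](_ : phi y * (y - t0) = _) ?c //; ring.
    have := Ew_eq0 It GF F0 EF; apply: ae_imp => y.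
    rewrite /F -[_ * y + _](_ : phi y * (y - t0) = _); last ring.
    move/eqP; rewrite mulf_eq0 subr_eq0 => /orP[/eqP //|/eqP ->] //.
  - apply: fin.
    pose F := fun y => (- 1) * (phi y * y + (- t0) * phi y).
    have GF : Good F := GoodZ _ (GoodD Gp1 (GoodZ _ Gp)).
    have EF : Ew t F = 0.
      rewrite EwZ //; last exact: (GoodD Gp1 (GoodZ _ Gp)).
      rewrite EwD // ?EwZ // ?E0 ?E1 ?mulr0 ?addr0 ?mulr0 //; exact: GoodZ.
    have F0 : forall y, 0 <= F y.
      move=> y; rewrite /F -[_ * y + _](_ : phi y * (y - t0) = _); last ring.
      by rewrite mulN1r oppr_ge0 c.
    have := Ew_eq0 It GF F0 EF; apply: ae_imp => y.
    rewrite /F -[_ * y + _](_ : phi y * (y - t0) = _); last ring.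
    move/eqP; rewrite mulN1r oppr_eq0 mulf_eq0 subr_eq0 => /orP[/eqP //|/eqP ->] //.
  - pose F := fun y => phi y * y * y + (- (s + t0)) * (phi y * y) + (s * t0) * phi y.
    have GF : Good F := GoodD (GoodD Gp2 (GoodZ _ Gp1)) (GoodZ _ Gp).
    have EF : Ew t F = Ew t (fun y => phi y * y * y).
      rewrite EwD //; last 2 first.
        exact: (GoodD Gp2 (GoodZ _ Gp1)).
        exact: GoodZ.
      rewrite EwD //; last exact: GoodZ.
      by rewrite !EwZ // E0 E1 !mulr0 !addr0.
    have F0 : forall y, 0 <= F y.
      by move=> y; rewrite /F -[_ + _ + _](_ : phi y * ((y - s) * (y - t0)) = _) ?d //; ring.
    split; first by rewrite -EF; exact: Ew_ge0.
    move=> K0; rewrite -EF in K0.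
    have := Ew_eq0 It GF F0 K0; apply: ae_imp => y.
    rewrite /F -[_ + _ + _](_ : phi y * ((y - s) * (y - t0)) = _); last ring.
    move/eqP; rewrite !mulf_eq0 !subr_eq0 => /orP[/eqP //|/orP[/eqP ->|/eqP ->]] //.
move=> ae0; have K0 : Ew t (fun y => phi y * y * y) = 0.
  apply: (Ew_ae0 It Gp2); apply: ae_imp ae0 => y ->; by rewrite !mul0r.
by rewrite K0; split.
Qed.


Lemma ae_point (c : R) : {ae nu, forall y, y = c} -> nu [set c] = 1%E.
Proof.
move=> [N [mN N0 sN]].
have mc : measurable [set c] by exact: measurable_set1.
have h1 : (nu (~` [set c]) <= nu N)%E.
  apply: le_measure; [by rewrite inE; exact: measurableC | by rewrite inE |].
  by move=> y /= yc; apply: sN.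
rewrite probability_setC // N0 in h1.
apply/eqP; rewrite eq_le probability_le1 //=.
have fin : nu [set c] \is a fin_num.
  by rewrite ge0_fin_numE // (le_lt_trans (probability_le1 _ mc)) // ltey.
rewrite -(fineK fin) lee_fin; move: h1; rewrite -(fineK fin) -EFinB lee_fin.
by rewrite subr_le0.
Qed.

Lemma L0pos t : I t -> Good (fun _ => 1) -> 0 < Ew t (fun _ => 1).
Proof.
move=> It G0; rewrite lt_def Ew_ge0 // andbT; apply/eqP => E0.
apply: aeF; have := Ew_eq0 It G0 (fun _ => ler01) E0; apply: ae_imp => y /eqP.
by rewrite oner_eq0.
Qed.

Lemma Vpos t : I t -> Good (fun _ => 1) -> (forall c : R, nu [set c] != 1%E) ->
  0 < Ew t (fun _ => 1) * Ew t (fun y => 1 * y * y) - Ew t (fun y => 1 * y) ^+ 2.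
Proof.
move=> It G0 nd.
set L0 := Ew t (fun _ => 1); set L1 := Ew t (fun y => 1 * y).
set L2 := Ew t (fun y => 1 * y * y).
have G1 := GoodM Iop G0; have G2 := GoodM Iop G1.
have l0 := L0pos It G0.
set c := L1 / L0.
pose F := fun y : R => 1 * y * y + (- (2 * c)) * (1 * y) + (c ^+ 2) * 1.
have GF : Good F := GoodD (GoodD G2 (GoodZ _ G1)) (GoodZ _ G0).
have EF : Ew t F = L2 - 2 * c * L1 + c ^+ 2 * L0.
  rewrite EwD //; last 2 first.
    exact: (GoodD G2 (GoodZ _ G1)).
    exact: GoodZ.
  rewrite EwD //; last exact: GoodZ.
  rewrite (EwZ (- (2 * c)) It G1) (EwZ (c ^+ 2) It G0) -/L0 -/L1 -/L2; ring.
have F0 : forall y, 0 <= F y.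
  move=> y; have -> : F y = (y - c) ^+ 2 by rewrite /F; ring.
  exact: sqr_ge0.
have EFpos : 0 < Ew t F.
  rewrite lt_def Ew_ge0 // andbT; apply/eqP => E0.
  have := Ew_eq0 It GF F0 E0; rewrite -/F => aeF0.
  have := nd c; rewrite ae_point ?eqxx //.
  apply: ae_imp aeF0 => y; have -> : F y = (y - c) ^+ 2 by rewrite /F; ring.
  by move/eqP; rewrite sqrf_eq0 subr_eq0 => /eqP.
have -> : L0 * L2 - L1 ^+ 2 = L0 * Ew t F.
  by rewrite EF /c; field; rewrite gt_eqF.
by rewrite mulr_gt0.
Qed.

End Meas2.

Set Implicit Arguments. Unset Strict Implicit.

Section Main.
Context (R : realType) (nu : probability R R) (I : set R).
Hypothesis Iop : forall t, I t -> exists2 d, 0 < d & forall s, `|s - t| <= d -> I s.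
Hypothesis Iconv : forall x y z, I x -> I y -> x <= z <= y -> I z.
Hypothesis G0 : Good nu I (fun _ => 1).
Local Notation Ew := (Ew nu).

Definition L0 s := Ew s (fun _ => 1).
Definition L1 s := Ew s (fun y => 1 * y).
Definition L2 s := Ew s (fun y => 1 * y * y).
Definition L3 s := Ew s (fun y => 1 * y * y * y).
Definition W s := L0 s * L2 s - L1 s * L1 s.

Let G1 := GoodM Iop G0.
Let G2 := GoodM Iop G1.
Let G3 := GoodM Iop G2.

Lemma dL0 t : I t -> is_derive t 1 L0 (L1 t).
Proof. by move=> It; exact: (DER Iop G0 It). Qed.
Lemma dL1 t : I t -> is_derive t 1 L1 (L2 t).
Proof. by move=> It; exact: (DER Iop G1 It). Qed.
Lemma dL2 t : I t -> is_derive t 1 L2 (L3 t).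
Proof. by move=> It; exact: (DER Iop G2 It). Qed.

Lemma L0pos' t : I t -> 0 < L0 t.
Proof. by move=> It; exact: (L0pos It G0). Qed.

Lemma YmgfE t : Ymgf nu t = L0 t.
Proof.
rewrite /Ymgf /L0 /Ew /Rintegral; congr fine.
by apply: eq_integral => y _; rewrite mul1r.
Qed.

Lemma tiltE t f : tilt_int nu t f = (L0 t)^-1 * Ew t f.
Proof. by rewrite /tilt_int YmgfE. Qed.

Lemma rhoE : rho nu = fun s => (L0 s)^-1 * L1 s.
Proof.
apply/funext => s; rewrite /rho tiltE /L1; congr (_ * _).
by apply: Ewext => y; rewrite mul1r.
Qed.

Lemma drho t : I t -> is_derive t 1 (rho nu) (W t / L0 t ^+ 2).
Proof.
move=> It; rewrite rhoE.
have l0 := L0pos' It.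
apply: (Dval (DM (DV (lt0r_neq0 l0) (dL0 It)) (dL1 It))).
by rewrite /W; field; rewrite gt_eqF.
Qed.

Hypothesis nd : forall c : R, nu [set c] != 1%E.

Lemma Wpos t : I t -> 0 < W t.
Proof.
move=> It; have := Vpos Iop It G0 nd.
by rewrite /W /L0 /L1 /L2 expr2.
Qed.


Variable psi : R -> R.
Hypothesis Gpsi : Good nu I psi.
Let Gp1 := GoodM Iop Gpsi.
Let Gp2 := GoodM Iop Gp1.

Definition P0 s := Ew s psi.
Definition P1 s := Ew s (fun y => psi y * y).
Definition P2 s := Ew s (fun y => psi y * y * y).
Definition C s := L0 s * P1 s - L1 s * P0 s.
Definition Hf s := C s / W s.
Definition al s := (L2 s * P0 s - L1 s * P1 s) / W s.
Definition be s := C s / W s.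
Definition K s := P2 s - al s * L2 s - be s * L3 s.

Lemma dP0 t : I t -> is_derive t 1 P0 (P1 t).
Proof. by move=> It; exact: (DER Iop Gpsi It). Qed.
Lemma dP1 t : I t -> is_derive t 1 P1 (P2 t).
Proof. by move=> It; exact: (DER Iop Gp1 It). Qed.

Lemma PE : (fun s => tilt_int nu s psi) = fun s => (L0 s)^-1 * P0 s.
Proof. by apply/funext => s; rewrite tiltE. Qed.

Lemma dP t : I t -> is_derive t 1 (fun s => tilt_int nu s psi) (C t / L0 t ^+ 2).
Proof.
move=> It; rewrite PE.
have l0 := L0pos' It.
apply: (Dval (DM (DV (lt0r_neq0 l0) (dL0 It)) (dP0 It))).
by rewrite /C; field; rewrite gt_eqF.
Qed.

Lemma dW t : I t -> is_derive t 1 W (L0 t * L3 t - L1 t * L2 t).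
Proof.
move=> It.
apply: (Dval (DB (DM (dL0 It) (dL2 It)) (DM (dL1 It) (dL1 It)))).
ring.
Qed.

Lemma dC t : I t -> is_derive t 1 C (L0 t * P2 t - L2 t * P0 t).
Proof.
move=> It.
apply: (Dval (DB (DM (dL0 It) (dP1 It)) (DM (dL1 It) (dP0 It)))).
ring.
Qed.

Lemma dH t : I t -> is_derive t 1 Hf (K t * L0 t / W t).
Proof.
move=> It; have w0 := Wpos It; have l0 := L0pos' It.
apply: (Dval (DM (dC It) (DV (lt0r_neq0 w0) (dW It)))).
rewrite /K /al /be /C /W; field.
by rewrite -/(W t) gt_eqF.
Qed.


Lemma rho_der t : I t -> derivable (rho nu) t 1.
Proof. by move=> It; case: (drho It). Qed.

Lemma rho_cont t : I t -> {for t, continuous (rho nu)}.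
Proof.
by move=> It; apply/differentiable_continuous/derivable1_diffP; exact: rho_der.
Qed.

Lemma rho_incr s1 s2 : I s1 -> I s2 -> s1 < s2 -> rho nu s1 < rho nu s2.
Proof.
move=> I1 I2 s12.
have Is : forall z, s1 <= z <= s2 -> I z by move=> z; exact: Iconv.
apply: (@gtr0_derive1_incr _ _ s1 s2) => //.
- move=> z; rewrite in_itv /= => /andP[h1 h2]; apply: rho_der; apply: Is.
  by rewrite (ltW h1) (ltW h2).
- move=> z; rewrite in_itv /= => /andP[h1 h2].
  have Iz : I z by apply: Is; rewrite (ltW h1) (ltW h2).
  rewrite derive1E; case: (drho Iz) => _ ->.
  by apply: divr_gt0; [exact: Wpos | apply: exprn_gt0; exact: L0pos'].
- exact: (@cont_within_of_der _ I _ _ _ rho_der Is).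
Qed.

Lemma rho_inj s1 s2 : I s1 -> I s2 -> rho nu s1 = rho nu s2 -> s1 = s2.
Proof.
move=> I1 I2 e; have [h|h|//] := ltgtP s1 s2.
- by have := rho_incr I1 I2 h; rewrite e ltxx.
- by have := rho_incr I2 I1 h; rewrite e ltxx.
Qed.

Lemma theta_rho t : I t -> theta_of nu I (rho nu t) = t.
Proof.
move=> It; rewrite /theta_of.
have [I' e] := @xgetI _ 0 [set s | I s /\ rho nu s = rho nu t] t (conj It erefl).
exact: rho_inj.
Qed.

Lemma theta_J r : Jset nu I r -> I (theta_of nu I r) /\ rho nu (theta_of nu I r) = r.
Proof. by move=> [t It <-]; rewrite theta_rho. Qed.

Lemma nearI t : I t -> \forall s \near t, I s.
Proof.
move=> It; have [d d0 hd] := Iop It.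
apply/nbhs_ballP; exists d => //= s; rewrite /ball /= => h.
by apply: hd; rewrite distrC ltW.
Qed.

Lemma dtheta t : I t -> is_derive (rho nu t) 1 (theta_of nu I) (L0 t ^+ 2 / W t).
Proof.
move=> It.
have w0 := Wpos It; have l0 := L0pos' It.
have h := @is_derive_inverse R (rho nu) (theta_of nu I) (W t / L0 t ^+ 2) t.
have c1 : {near t, cancel (rho nu) (theta_of nu I)}.
  by near=> s; apply: theta_rho; near: s; exact: nearI.
have c2 : {near t, continuous (rho nu)}.
  by near=> s; apply: rho_cont; near: s; exact: nearI.
have c3 : W t / L0 t ^+ 2 != 0.
  by rewrite mulf_neq0 // ?invr_eq0 gt_eqF // exprn_gt0.
apply: (Dval (h c1 c2 (drho It) c3)).
by rewrite invf_div.
Unshelve. all: end_near.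
Qed.


Lemma Jconv : @itvset R (Jset nu I).
Proof.
move=> x y z [s1 I1 <-] [s2 I2 <-] /andP[xz zy].
have IVTc : forall a b, I a -> I b -> a <= b ->
    Num.min (rho nu a) (rho nu b) <= z <= Num.max (rho nu a) (rho nu b) ->
    Jset nu I z.
  move=> a b Ia Ib ab hz.
  have Is : forall w, a <= w <= b -> I w by move=> w; exact: Iconv.
  have [c] := IVT ab (@cont_within_of_der _ I _ _ _ rho_der Is) hz.
  by rewrite in_itv /= => hc <-; exists c => //; exact: Is.
have [h|h] := leP s1 s2.
- apply: (IVTc s1 s2) => //.
  by rewrite ge_min xz le_max zy orbT.
- apply: (IVTc s2 s1) => //; first exact: ltW.
  by rewrite ge_min xz orbT le_max zy.
Qed.

Lemma Jnear r : Jset nu I r -> \forall r' \near r, Jset nu I r'.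
Proof.
move=> Jr; have [It er] := theta_J Jr.
set t := theta_of nu I r in It er.
have [d d0 hd] := Iop It.
have [I1 I2] := Iside hd d0.
have lo : rho nu (t - d) < r.
  by rewrite -er; apply: rho_incr => //; rewrite ltrBlDr ltrDl.
have hi : r < rho nu (t + d).
  by rewrite -er; apply: rho_incr => //; rewrite ltrDl.
set e := Num.min (r - rho nu (t - d)) (rho nu (t + d) - r).
have e0 : 0 < e by rewrite lt_min !subr_gt0 lo hi.
near=> r'.
have h : `|r - r'| < e by near: r'; apply: cvgr_dist_lt; [exact: cvg_id | exact: e0].
have [h1 h2] : r - rho nu (t - d) > `|r - r'| /\ rho nu (t + d) - r > `|r - r'|.
  by move: h; rewrite lt_min => /andP[].
have [n1 n2] := (ler_norm (r - r'), ler_norm (- (r - r'))); rewrite normrN in n2.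
have tdd : t - d <= t + d by rewrite lerD2l; apply: (le_trans _ (ltW d0)); rewrite oppr_le0 ltW.
have Is : forall w, t - d <= w <= t + d -> I w by move=> w; exact: Iconv.
have lohi : rho nu (t - d) <= rho nu (t + d) by apply: ltW; exact: (lt_trans lo hi).
have hz : Num.min (rho nu (t - d)) (rho nu (t + d)) <= r' <= Num.max (rho nu (t - d)) (rho nu (t + d)).
  rewrite min_l // max_r //; apply/andP; split.
  - have : r - rho nu (t - d) > r - r' by exact: (le_lt_trans n1 h1).
    by rewrite ltrD2l ltrN2 => /ltW.
  - have : rho nu (t + d) - r > r' - r by rewrite -opprB; exact: (le_lt_trans n2 h2).
    by rewrite ltrD2r => /ltW.
have [c] := IVT tdd (@cont_within_of_der _ I _ _ _ rho_der Is) hz.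
by rewrite in_itv /= => hc <-; exists c => //; exact: Is.
Unshelve. all: end_near.
Qed.


Lemma dPsi r : Jset nu I r ->
  is_derive r 1 (PsiF nu I psi) (Hf (theta_of nu I r)).
Proof.
move=> Jr; have [It er] := theta_J Jr.
set t := theta_of nu I r in It er *.
have h1 := dP It.
have h2 := dtheta It; rewrite er in h2.
have l0 := L0pos' It; have w0 := Wpos It.
apply: (Dval (is_derive1_comp h1 h2)).
by rewrite /Hf; field; rewrite !gt_eqF.
Qed.

Lemma dPsi2 r : Jset nu I r ->
  is_derive r 1 (derive1 (PsiF nu I psi))
    (K (theta_of nu I r) * L0 (theta_of nu I r) ^+ 3 / W (theta_of nu I r) ^+ 2).
Proof.
move=> Jr; have [It er] := theta_J Jr.
have e : \forall r' \near r, (Hf \o theta_of nu I) r' = derive1 (PsiF nu I psi) r'.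
  near=> r'.
  have Jr' : Jset nu I r' by near: r'; exact: Jnear.
  by rewrite derive1E; case: (dPsi Jr') => _ ->.
set t := theta_of nu I r in It er *.
have h1 := dH It.
have h2 := dtheta It; rewrite er in h2.
have l0 := L0pos' It; have w0 := Wpos It.
apply: (near_eq_is_derive e).
apply: (Dval (is_derive1_comp h1 h2)).
by field; rewrite !gt_eqF.
Unshelve. all: end_near.
Qed.


Lemma Ew3 t (A B D : R -> R) c1 c2 : I t -> Good nu I A -> Good nu I B -> Good nu I D ->
  Ew t (fun y => A y + c1 * B y + c2 * D y) = Ew t A + c1 * Ew t B + c2 * Ew t D.
Proof.
move=> It GA GB GD.
rewrite (EwD It (GoodD GA (GoodZ c1 GB)) (GoodZ c2 GD)).
by rewrite (EwD It GA (GoodZ c1 GB)) (EwZ c1 It GB) (EwZ c2 It GD).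
Qed.

Lemma Ksign t : I t ->
  (forall x y s, 0 <= s <= 1 ->
     psi (s * x + (1 - s) * y) <= s * psi x + (1 - s) * psi y) ->
  0 <= K t /\ (K t = 0 -> {ae nu, forall y, psi y = be t * y + al t}).
Proof.
move=> It cvx.
have w0 := Wpos It; have l0 := L0pos' It.
pose phi := fun y => psi y + (- al t) * 1 + (- be t) * (1 * y).
have Gphi : Good nu I phi := GoodD (GoodD Gpsi (GoodZ _ G0)) (GoodZ _ G1).
have E0 : Ew t phi = 0.
  rewrite /phi (Ew3 _ _ It Gpsi G0 G1) -/(P0 t) -/(L0 t) -/(L1 t).
  by rewrite /al /be /C /W; field; rewrite -/(W t) gt_eqF.
have E1 : Ew t (fun y => phi y * y) = 0.
  have -> : Ew t (fun y => phi y * y) =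
    Ew t (fun y => psi y * y + (- al t) * (1 * y) + (- be t) * (1 * y * y)).
    by apply: Ewext => y; rewrite /phi; ring.
  rewrite (Ew3 _ _ It Gp1 G1 G2) -/(P1 t) -/(L1 t) -/(L2 t).
  by rewrite /al /be /C /W; field; rewrite -/(W t) gt_eqF.
have E2 : Ew t (fun y => phi y * y * y) = K t.
  have -> : Ew t (fun y => phi y * y * y) =
    Ew t (fun y => psi y * y * y + (- al t) * (1 * y * y) + (- be t) * (1 * y * y * y)).
    by apply: Ewext => y; rewrite /phi; ring.
  rewrite (Ew3 _ _ It Gp2 G2 G3) -/(P2 t) -/(L2 t) -/(L3 t).
  by rewrite /K; ring.
have cphi : forall x y s, 0 <= s <= 1 ->
    phi (s * x + (1 - s) * y) <= s * phi x + (1 - s) * phi y.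
  move=> x y s hs; have := cvx x y s hs; rewrite /phi => h.
  have -> : s * (psi x + - al t * 1 + - be t * (1 * x)) +
            (1 - s) * (psi y + - al t * 1 + - be t * (1 * y)) =
            s * psi x + (1 - s) * psi y + - al t * 1 + - be t * (1 * (s * x + (1 - s) * y)).
    by ring.
  by rewrite lerD2r lerD2r.
have [S1 S2] := SIGN Iop It Gphi cphi E0 E1.
rewrite E2 in S1 S2; split => // /S2; apply: ae_imp => y.
rewrite /phi => h.
have : psi y = - (- al t * 1 + - be t * (1 * y)) by rewrite -[psi y]subr0 -h; ring.
by move=> ->; ring.
Qed.


End Main.

Set Implicit Arguments. Unset Strict Implicit.

Section Fin.
Context (R : realType) (nu : probability R R) (I : set R).
Hypothesis Iop : forall t, I t -> exists2 d, 0 < d & forall s, `|s - t| <= d -> I s.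
Hypothesis Iconv : forall x y z, I x -> I y -> x <= z <= y -> I z.
Hypothesis G0 : Good nu I (fun _ => 1).
Hypothesis nd : forall c : R, nu [set c] != 1%E.
Variable psi : R -> R.
Hypothesis Gpsi : Good nu I psi.

Lemma base r : Jset nu I r ->
  (forall x y s, 0 <= s <= 1 ->
     psi (s * x + (1 - s) * y) <= s * psi x + (1 - s) * psi y) ->
  [/\ derivable (PsiF nu I psi) r 1, derivable (derive1 (PsiF nu I psi)) r 1,
      derive1 (derive1 (PsiF nu I psi)) r =
        K nu psi (theta_of nu I r) * (L0 nu (theta_of nu I r) ^+ 3 / W nu (theta_of nu I r) ^+ 2),
      0 < L0 nu (theta_of nu I r) ^+ 3 / W nu (theta_of nu I r) ^+ 2 &
      (0 <= K nu psi (theta_of nu I r) /\ (K nu psi (theta_of nu I r) = 0 ->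
         {ae nu, forall y, psi y = be nu psi (theta_of nu I r) * y + al nu psi (theta_of nu I r)}))].
Proof.
move=> Jr cvx.
have [It _] := theta_J Iop Iconv G0 nd Jr.
have [d1 _] := dPsi Iop Iconv G0 nd Gpsi Jr.
have [d2 v2] := dPsi2 Iop Iconv G0 nd Gpsi Jr.
split.
- exact: d1.
- exact: d2.
- by rewrite derive1E v2 mulrA.
- by apply: divr_gt0; apply: exprn_gt0; [exact: (L0pos' G0 It) | exact: (Wpos Iop G0 nd It)].
- exact: (Ksign Iop G0 nd Gpsi It cvx).
Qed.


Lemma main_result :
  (forall x y s, 0 <= s <= 1 ->
     psi (s * x + (1 - s) * y) <= s * psi x + (1 - s) * psi y) ->
  convex_on (Jset nu I) (PsiF nu I psi) /\
  (~ (exists c d : R, {ae nu, forall x, psi x = c * x + d}) ->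
     (forall r, Jset nu I r -> derivable (PsiF nu I psi) r 1 /\
        derivable (derive1 (PsiF nu I psi)) r 1 /\
        0 < derive1n 2 (PsiF nu I psi) r) /\
     strictly_convex_on (Jset nu I) (PsiF nu I psi)).
Proof.
move=> cvx.
have iJ := Jconv Iop Iconv G0.
split.
  apply: (@convex_of_D2 R (Jset nu I) (PsiF nu I psi) iJ) => r Jr.
  have [d1 d2 v p [k0 _]] := base Jr cvx.
  split; first exact: d1.
  split; first exact: d2.
  by rewrite v; apply: mulr_ge0 => //; exact: ltW.
move=> naff.
have D2 : forall r, Jset nu I r -> derivable (PsiF nu I psi) r 1 /\
    derivable (derive1 (PsiF nu I psi)) r 1 /\
    0 < derive1 (derive1 (PsiF nu I psi)) r.
  move=> r Jr; have [d1 d2 v p [k0 k1]] := base Jr cvx.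
  split; first exact: d1.
  split; first exact: d2.
  rewrite v; apply: mulr_gt0 => //.
  rewrite lt_def k0 andbT; apply/eqP => /k1 ae; apply: naff.
  by exists (be nu psi (theta_of nu I r)), (al nu psi (theta_of nu I r)).
split; first exact: D2.
exact: (@sconvex_of_D2 R (Jset nu I) (PsiF nu I psi) iJ).
Qed.

End Fin.

Set Implicit Arguments. Unset Strict Implicit.

Section E.
Context (R : realType).

Lemma side_a (a : \bar R) (t : R) : (a < t%:E)%E -> exists2 d, 0 < d & (a < (t - d)%:E)%E.
Proof.
case: a => [r| |] /=.
- rewrite lte_fin => rt; exists ((t - r) / 2); first by apply: divr_gt0; rewrite ?subr_gt0.
  by rewrite lte_fin; lra.
- by rewrite ltNge leey.
- by move=> _; exists 1 => //; rewrite ltNyr.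
Qed.

Lemma side_b (b : \bar R) (t : R) : (t%:E < b)%E -> exists2 d, 0 < d & ((t + d)%:E < b)%E.
Proof.
case: b => [r| |] /=.
- rewrite lte_fin => rt; exists ((r - t) / 2); first by apply: divr_gt0; rewrite ?subr_gt0.
  by rewrite lte_fin; lra.
- by move=> _; exists 1 => //; rewrite ltry.
- by rewrite ltNge leNye.
Qed.

Lemma eitv_op (a b : \bar R) t : eitv a b t ->
  exists2 d, 0 < d & forall s, `|s - t| <= d -> eitv a b s.
Proof.
rewrite /eitv /= => /andP[hat htb].
have [da da0 ha] := side_a hat; have [db db0 hb] := side_b htb.
exists (Num.min da db); first by rewrite lt_min da0 db0.
move=> s; rewrite ler_norml => /andP[h1 h2].
have m1 := ge_min (Num.min da db) da db; rewrite lexx /= in m1.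
have m2 : Num.min da db <= db by rewrite ge_min lexx orbT.
have m1' : Num.min da db <= da by rewrite ge_min lexx.
apply/andP; split.
- apply: (lt_le_trans ha); rewrite lee_fin; lra.
- apply: (le_lt_trans _ hb); rewrite lee_fin; lra.
Qed.

Lemma eitv_conv (a b : \bar R) x y z : eitv a b x -> eitv a b y -> x <= z <= y -> eitv a b z.
Proof.
rewrite /eitv /= => /andP[ax _] /andP[_ yb] /andP[xz zy].
apply/andP; split.
- by apply: (lt_le_trans ax); rewrite lee_fin.
- by apply: (le_lt_trans _ yb); rewrite lee_fin.
Qed.

End E.

Unset Implicit Arguments.

Theorem theoremA1 (R : realType) (nu : probability R R) (a b : \bar R)
  (psi : R -> R) :
  (forall c : R, nu [set c] != 1%E) ->
  (a < b)%E ->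
  (forall theta, eitv a b theta ->
     (\int[nu]_x (expR (theta * x))%:E < +oo)%E) ->
  measurable_fun setT psi ->
  (forall theta, eitv a b theta ->
     (\int[nu]_x (`|psi x| * expR (theta * x))%:E < +oo)%E) ->
  let J := Jset nu (eitv a b) in
  let Psi := PsiF nu (eitv a b) psi in
  (forall x y t, 0 <= t <= 1 ->
     psi (t * x + (1 - t) * y) <= t * psi x + (1 - t) * psi y) ->
  convex_on J Psi /\
  (~ (exists c d : R, {ae nu, forall x, psi x = c * x + d}) ->
     (forall r, J r -> derivable Psi r 1 /\ derivable (derive1 Psi) r 1 /\
                       0 < derive1n 2 Psi r) /\
     strictly_convex_on J Psi).
Proof.
move=> nd ab H3 mpsi H5 J Psi cvx.
have G0 : Good nu (eitv a b) (fun _ => 1).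
  split; first exact: measurable_cst.
  move=> t It; apply/integrableP; split.
    by apply/measurable_EFinP; apply: measurable_funM => //; exact: mexp.
  apply: le_lt_trans (H3 t It); rewrite le_eqVlt; apply/orP; left; apply/eqP.
  apply: eq_integral => y _ /=.
  by rewrite mul1r ger0_norm // expR_ge0.
have Gpsi : Good nu (eitv a b) psi.
  split; first exact: mpsi.
  move=> t It; apply/integrableP; split.
    by apply/measurable_EFinP; apply: measurable_funM => //; exact: mexp.
  apply: le_lt_trans (H5 t It); rewrite le_eqVlt; apply/orP; left; apply/eqP.
  apply: eq_integral => y _ /=.
  by rewrite normrM (ger0_norm (expR_ge0 _)).
exact: (main_result (@eitv_op R a b) (@eitv_conv R a b) G0 nd Gpsi cvx).
Qed.
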